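(* Let $G$ be a non-Mengerian graph and let $xy$ be a multiedge of $G$. Then the graph obtained from $G$ by m-subdividing $xy$ is also non-Mengerian.
   Context: Graphs are finite, loopless, and may have parallel edges. The multiplicity of a pair $x,y$ is the number of edges with endpoints $x,y$; a pair with multiplicity at least 1 is a multiedge. m-subdividing a multiedge $xy$ of multiplicity $k$ means: delete the $k$ edges between $x$ and $y$, add a new vertex $z$, add $k$ parallel edges between $x$ and $z$ and $k$ parallel edges between $z$ and $y$. A temporal graph is a pair $(G,\lambda)$ with $\lambda:E(G)\to\mathbb{Z}_{>0}$. A temporal $s,t$-path is an $s,t$-path $(s=v_1,e_1,\dots,e_{k-1},v_k=t)$ of $G$ (no repeated vertices) with $\lambda(e_1)\le\dots\le\lambda(e_{k-1})$. Two temporal $s,t$-paths are disjoint if they share no vertex other than $s,t$. For distinct non-adjacent $s,t$, a temporal $s,t$-vertex cut is a set $S\subseteq V(G)\setminus\{s,t\}$ such that $G-S$ (with $\lambda$ restricted) has no temporal $s,t$-path. $p_{G,\lambda}(s,t)$ is the maximum number of pairwise disjoint temporal $s,t$-paths and $c_{G,\lambda}(s,t)$ the minimum size of a temporal $s,t$-vertex cut. $G$ is Mengerian if $p_{G,\lambda}(s,t)=c_{G,\lambda}(s,t)$ for every $\lambda$ and every pair of distinct non-adjacent $s,t\in V(G)$. *)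

(* Defs.v *)
From mathcomp Require Import all_boot.
From mathcomp Require Import boolp.
Set Implicit Arguments. Unset Strict Implicit. Unset Printing Implicit Defensive.

(* A (finite, loopless) multigraph is given by a finite vertex type V, a
   finite edge type E and an endpoint map ends : E -> V * V, with the
   looplessness condition (ends e).1 != (ends e).2.  Parallel edges are
   distinct elements of E with the same endpoints. *)

Section TemporalGraphs.
Variables (V E : finType) (ends : E -> V * V).

Definition loopless := forall e, (ends e).1 != (ends e).2.

Definition joins (e : E) (u v : V) : bool :=
  (ends e == (u, v)) || (ends e == (v, u)).

Definition adjacent (u v : V) : Prop := exists e, joins e u v.

(* A walk from u is encoded by the list of steps (e_i, v_{i+1}):
   the walk is u = v_1, e_1, v_2, ..., e_{k-1}, v_k. *)
Fixpoint walk_ok (u : V) (p : seq (E * V)) : bool :=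
  if p is st :: p' then joins st.1 u st.2 && walk_ok st.2 p' else true.

Definition pverts (s : V) (p : seq (E * V)) : seq V := s :: map snd p.

Definition temporal_path (lam : E -> nat) (s t : V) (p : seq (E * V)) : bool :=
  [&& walk_ok s p, uniq (pverts s p), last s (map snd p) == t
    & sorted leq (map (fun st => lam st.1) p)].

Definition disjoint_paths (s t : V) (p q : seq (E * V)) : bool :=
  all (fun v => (v \notin pverts s q) || (v == s) || (v == t)) (pverts s p).

Definition has_disjoint_paths (lam : E -> nat) (s t : V) (k : nat) : Prop :=
  exists ps : seq (seq (E * V)),
    [/\ size ps = k, all (temporal_path lam s t) ps &
        forall i j, i < k -> j < k -> i != j ->
          disjoint_paths s t (nth [::] ps i) (nth [::] ps j)].

(* S is a temporal s,t-vertex cut: S avoids s,t and G - S has no temporal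
   s,t-path (a path of G - S is a path of G avoiding S) *)
Definition temporal_cut (lam : E -> nat) (s t : V) (S : {set V}) : Prop :=
  [/\ s \notin S, t \notin S &
      ~ exists p, temporal_path lam s t p && all (fun v => v \notin S) (pverts s p)].

(* p_{G,lam}(s,t): maximum number of pairwise disjoint temporal paths
   (any such family has at most #|V| members, as s,t are non-adjacent) *)
Definition pmax (lam : E -> nat) (s t : V) : nat :=
  \max_(k < #|V|.+1 | `[< has_disjoint_paths lam s t k >]) k.

(* c_{G,lam}(s,t): minimum size of a temporal s,t-vertex cut
   (V \ {s,t} is always a cut for non-adjacent s,t, so the min is < #|V|) *)
Definition cmin (lam : E -> nat) (s t : V) : nat :=
  \big[minn/#|V|]_(S : {set V} | `[< temporal_cut lam s t S >]) #|S|.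

Definition Mengerian : Prop :=
  forall lam : E -> nat, (forall e, 0 < lam e) ->
  forall s t : V, s != t -> ~ adjacent s t -> pmax lam s t = cmin lam s t.

End TemporalGraphs.

(* m-subdivision of the multiedge xy: new vertex z = None; every edge e
   between x and y becomes an edge x z (inl e) and an edge z y (inr e);
   all other edges are unchanged. *)
Section MSubdivide.
Variables (V E : finType) (ends : E -> V * V) (x y : V).

Definition xy_edge (e : E) : bool := joins ends e x y.

Definition msub_edge : finType := (E + {e : E | xy_edge e})%type.

Definition msub_ends (f : msub_edge) : option V * option V :=
  match f with
  | inl e => if xy_edge e then (Some x, None)
             else (Some (ends e).1, Some (ends e).2)
  | inr e => (None, Some y)
  end.

End MSubdivide.

(* Main.v *)
Require Import Defs.
From mathcomp Require Import all_boot boolp.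
Set Implicit Arguments. Unset Strict Implicit. Unset Printing Implicit Defensive.

Lemma duality (V E : finType) (ends : E -> V * V) lam s t k (S : {set V}) :
  has_disjoint_paths ends lam s t k -> temporal_cut ends lam s t S -> k <= #|S|.
Proof.
case=> ps [Hsz Hall Hdis] [HsS HtS Hno].
have Hhit i : i < k -> has (mem S) (pverts s (nth [::] ps i)).
  move=> Hi; apply/negPn/negP => Hn; apply: Hno; exists (nth [::] ps i).
  apply/andP; split; first by apply: (allP Hall); rewrite mem_nth ?Hsz.
  apply/allP => v Hv; apply/negP => HvS; apply: (negP Hn); apply/hasP; exists v => //.
pose f (i : 'I_k) := let l := pverts s (nth [::] ps i) in nth s l (find (mem S) l).
have fS i : f i \in S by rewrite /f; exact: (nth_find s (Hhit i (ltn_ord i))).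
have fin i : f i \in pverts s (nth [::] ps i).
  by rewrite /f; apply: mem_nth; rewrite -has_find Hhit.
have finj : injective f.
  move=> i j Hij; case: (eqVneq (val i) (val j)) => [/val_inj // | Hne].
  have := allP (Hdis i j (ltn_ord i) (ltn_ord j) Hne) (f i) (fin i).
  rewrite Hij fin /=.
  have Hs : f j != s by apply: contraNneq HsS => <-.
  have Ht : f j != t by apply: contraNneq HtS => <-.
  by rewrite (negbTE Hs) (negbTE Ht).
have -> : k = #|[set f i | i in 'I_k]| by rewrite card_imset // card_ord.
by apply: subset_leq_card; apply/subsetP => v /imsetP [i _ ->]; exact: fS.
Qed.

Lemma cut_exists (V E : finType) (ends : E -> V * V) lam s t :
  s != t -> ~ adjacent ends s t -> temporal_cut ends lam s t (~: [set s; t]).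
Proof.
move=> Hst Hadj; split; rewrite ?in_setC ?in_set2 ?eqxx ?orbT //.
case=> p /andP [/and4P [Hw Hu Hl _] Hav].
case: p Hw Hu Hl Hav => [|[e v] p] /=; first by rewrite (negbTE Hst).
move=> /andP [Hj _] /andP [Hsv _] _ /andP [_ /andP [Hv _]].
move: Hv; rewrite in_setC in_set2 negbK => /orP [/eqP Hv | /eqP Hv].
  by move: Hsv; rewrite Hv in_cons eqxx.
by apply: Hadj; exists e; rewrite -Hv.
Qed.

Lemma pmax_le_cmin (V E : finType) (ends : E -> V * V) lam s t :
  s != t -> ~ adjacent ends s t -> pmax ends lam s t <= cmin ends lam s t.
Proof.
move=> Hst Hadj; apply/bigmax_leqP => k /asboolP Hk; rewrite /cmin.
apply: (big_ind (fun m => k <= m)).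
- exact: leq_trans (duality Hk (cut_exists lam Hst Hadj)) (max_card _).
- by move=> a b Ha Hb; rewrite leq_min Ha Hb.
- by move=> S /asboolP HS; exact: duality Hk HS.
Qed.

Lemma cmin_le_card (V E : finType) (ends : E -> V * V) lam s t :
  cmin ends lam s t <= #|V|.
Proof.
rewrite /cmin; apply: (big_ind (fun m => m <= #|V|)) => //.
- by move=> a b Ha _; exact: leq_trans (geq_minl a b) Ha.
- by move=> S _; exact: max_card.
Qed.

Lemma cmin_le_cut (V E : finType) (ends : E -> V * V) lam s t S :
  temporal_cut ends lam s t S -> cmin ends lam s t <= #|S|.
Proof.
move=> HS; rewrite /cmin.
move: (mem_index_enum S).
elim: (index_enum _) => [//|a r IH]; rewrite inE big_cons.
case/orP => [/eqP <- | Hr].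
  by case: ifP => [_|]; [exact: geq_minl | move/asboolP].
case: ifP => _; last exact: IH.
exact: leq_trans (geq_minr _ _) (IH Hr).
Qed.

Definition eo (V E : finType) (ends : E -> V * V) (x y : V) (f : msub_edge ends x y) : E :=
  match f with inl e => e | inr e => val e end.

Lemma joinsE (V E : finType) (ends : E -> V * V) (x y : V) (f : msub_edge ends x y) a b :
  joins (@msub_ends V E ends x y) f a b =
  match f with
  | inl e => if xy_edge ends x y e then
               ((a == Some x) && (b == None)) || ((a == None) && (b == Some x))
             else (if a is Some a' then if b is Some b' then joins ends e a' b' else false else false)
  | inr _ => ((a == None) && (b == Some y)) || ((a == Some y) && (b == None))
  end.
Proof.
rewrite /joins; case: f => [e|e] /=; last first.
  by case: a => [a|]; case: b => [b|]; rewrite /= ?xpair_eqE /= ?andbF ?andbT ?orbF // eq_sym.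
case: ifP => _.
  by case: a => [a|]; case: b => [b|]; rewrite /= ?xpair_eqE /= ?andbF ?andbT ?orbF // eq_sym.
case: (ends e) => [e1 e2] /=.
by case: a => [a|]; case: b => [b|]; rewrite /= ?xpair_eqE ?andbF ?andFb //.
Qed.

Lemma xy_joins (V E : finType) (ends : E -> V * V) (x y : V) e u v :
  xy_edge ends x y e -> joins ends e u v -> ((u == x) && (v == y)) || ((u == y) && (v == x)).
Proof.
rewrite /xy_edge /joins; case: (ends e) => a b; rewrite !xpair_eqE.
by case/orP=> /andP[/eqP-> /eqP->]; case/orP=> /andP[/eqP-> /eqP->]; rewrite !eqxx ?orbT.
Qed.

Definition mp (V E : finType) (ends : E -> V * V) (x y : V)
  (p : seq (msub_edge ends x y * option V)) : seq (E * V) :=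
  pmap (fun st => if st.2 is Some v then Some (eo st.1, v) else None) p.

Lemma walk_mp (V E : finType) (ends : E -> V * V) (x y : V) p u (u' : option V) :
  walk_ok (@msub_ends V E ends x y) u' p -> uniq (u' :: map snd p) ->
  (if u' is Some w then w == u else ((u == x) || (u == y)) && (Some u \notin map snd p)) ->
  walk_ok ends u (mp p).
Proof.
elim: p u u' => [//|[f o] p IH] u u' /= /andP [Hj Hw] /andP [Hn Hu] Hinv.
rewrite joinsE in Hj.
have sN : forall z : V, (Some z == None) = false by [].
have Ns : forall z : V, (None == Some z) = false by [].
case: o Hj Hw Hn Hu Hinv => [v|] Hj Hw Hn Hu Hinv /=.
  apply/andP; split; last by apply: IH Hw Hu _.
  case: u' Hj Hn Hinv => [w|] Hj Hn Hinv.
    move/eqP: Hinv => <-.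
    case: f Hj => [e|e] /=; last by rewrite sN andbF.
    by case: ifP => _ //; rewrite sN andbF.
  move: Hinv; rewrite in_cons negb_or => /andP [Huxy /andP [Huv _]].
  have Huv' : u != v by [].
  case: f Hj => [e|e] /=.
    case: ifP => // Hxy /= /eqP [] Hv; subst v.
    move: Huxy; rewrite (negbTE Huv') /= => /eqP ->.
    by rewrite /joins orbC.
  rewrite orbF => /eqP [] Hv; subst v.
  move: Huxy; rewrite (negbTE Huv') orbF => /eqP ->.
  exact: (valP e).
apply: IH Hw Hu _.
case: u' Hj Hn Hinv => [w|] Hj Hn Hinv; last first.
  by case: f Hj => [e|e] //=; case: ifP.
move/eqP: Hinv Hn => <- Hn.
rewrite in_cons negb_or in Hn; case/andP: Hn => _ ->; rewrite andbT.
case: f Hj => [e|e] /=; first by case: ifP => // _; rewrite eqxx andbT orbF => /eqP [->]; rewrite eqxx.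
by rewrite eqxx andbT => /eqP [->]; rewrite eqxx orbT.
Qed.

Lemma mp_snd (V E : finType) (ends : E -> V * V) (x y : V) p :
  map snd (@mp V E ends x y p) = pmap id (map snd p).
Proof. by elim: p => [//|[f [v|]] p IH] /=; rewrite IH. Qed.

Lemma last_mp (V E : finType) (ends : E -> V * V) (x y : V) p (a : option V) s0 t0 :
  last a (map snd p) = Some t0 -> (a = None \/ a = Some s0) ->
  last s0 (map snd (@mp V E ends x y p)) = t0.
Proof.
elim: p a s0 => [|[f [v|]] p IH] a s0 /=.
  by move=> -> [] // [].
move=> H _; exact: IH H (or_intror erefl).
move=> H _; exact: IH H (or_introl erefl).
Qed.

Lemma mem_mp (V E : finType) (ends : E -> V * V) (x y : V) p s0 v :
  (v \in pverts s0 (@mp V E ends x y p)) = (Some v \in pverts (Some s0) p).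
Proof.
rewrite /pverts mp_snd.
have -> : s0 :: pmap id (map snd p) = pmap id (Some s0 :: map snd p) by [].
by rewrite mem_pmap map_id.
Qed.

Lemma temporal_mp (V E : finType) (ends : E -> V * V) (x y : V) lam p s t :
  temporal_path (@msub_ends V E ends x y) (fun f => lam (eo f)) (Some s) (Some t) p ->
  temporal_path ends lam s t (mp p).
Proof.
case/and4P => Hw Hu Hl Hs; apply/and4P; split.
- apply: walk_mp Hw Hu _; exact: eqxx.
- rewrite /pverts mp_snd.
  have -> : s :: pmap id (map snd p) = pmap id (Some s :: map snd p) by [].
  by apply: (pmap_uniq (g := Some)) => //; case.
- by apply/eqP; apply: (last_mp (a := Some s)) (or_intror erefl); apply/eqP.
- apply: subseq_sorted Hs; first exact: leq_trans.
  elim: p {Hw Hu Hl} => [//|[f [v|]] p IH] /=; first by rewrite eqxx.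
  exact: subseq_trans IH (subseq_cons _ _).
Qed.

Lemma disj_mp (V E : finType) (ends : E -> V * V) (x y : V) p q s t :
  disjoint_paths (Some s) (Some t) p q ->
  disjoint_paths s t (@mp V E ends x y p) (@mp V E ends x y q).
Proof.
move/allP => H; apply/allP => v; rewrite mem_mp => Hv.
by have := H _ Hv; rewrite mem_mp.
Qed.

Lemma paths_transfer (V E : finType) (ends : E -> V * V) (x y : V) lam s t k :
  has_disjoint_paths (@msub_ends V E ends x y) (fun f => lam (eo f)) (Some s) (Some t) k ->
  has_disjoint_paths ends lam s t k.
Proof.
case=> ps [Hsz Hall Hdis]; exists (map (@mp V E ends x y) ps); split.
- by rewrite size_map.
- by apply/allP => q /mapP [p Hp ->]; apply: temporal_mp (allP Hall p Hp).
- move=> i j Hi Hj Hne; rewrite !(nth_map [::]) ?Hsz //.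
  exact: disj_mp (Hdis i j Hi Hj Hne).
Qed.

Fixpoint mlift (V E : finType) (ends : E -> V * V) (x y : V)
  (e0' : {e | xy_edge ends x y e}) (u : V) (p : seq (E * V))
  : seq (msub_edge ends x y * option V) :=
  if p is (e, v) :: p' then
   (if xy_edge ends x y e then
     (if u == x then [:: (inl e, None); (inr (insubd e0' e), Some v)]
      else [:: (inr (insubd e0' e), None); (inl e, Some v)])
    else [:: (inl e, Some v)]) ++ mlift e0' v p'
  else [::].

Lemma walk_lift (V E : finType) (ends : E -> V * V) (x y : V) e0' u p :
  walk_ok ends u p -> walk_ok (@msub_ends V E ends x y) (Some u) (mlift e0' u p).
Proof.
elim: p u => [//|[e v] p IH] u /= /andP [Hj Hw].
have sN : forall z : V, (Some z == None) = false by [].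
have Ns : forall z : V, (None == Some z) = false by [].
have eqS : forall a b : V, (Some a == Some b) = (a == b) by [].
case: ifP => Hxy /=.
  have := xy_joins Hxy Hj.
  case: ifP => Hux /=; rewrite !joinsE /= Hxy ?eqxx ?sN ?Ns /= ?andbT ?orbF ?orbT.
  - rewrite (IH v Hw) !eqS Hux andbT /=.
    case/orP => [//|/andP [Huy /eqP ->]].
    by rewrite -(eqP Hux).
  - by rewrite (IH v Hw) !eqS andbT.
by rewrite joinsE Hxy Hj IH.
Qed.

Lemma path_lift (V E : finType) (ends : E -> V * V) (x y : V) e0' (lam : E -> nat) u p a :
  path leq a (map (fun st => lam st.1) p) ->
  path leq a (map (fun st => lam (eo st.1)) (@mlift V E ends x y e0' u p)).
Proof.
elim: p u a => [//|[e v] p IH] u a /= /andP [Ha Hp].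
rewrite map_cat cat_path; case: ifP => Hxy; last by rewrite /= Ha /= IH.
have Hv : sval (insubd e0' e) = e := insubdK e0' Hxy.
by case: ifP => _ /=; rewrite Hv Ha leqnn /= IH.
Qed.

Lemma last_lift (V E : finType) (ends : E -> V * V) (x y : V) e0' u p :
  last (Some u) (map snd (@mlift V E ends x y e0' u p)) = Some (last u (map snd p)).
Proof.
elim: p u => [//|[e v] p IH] u /=.
by rewrite map_cat last_cat -IH; case: ifP => _ //; case: ifP.
Qed.

Lemma memS_lift (V E : finType) (ends : E -> V * V) (x y : V) e0' u p w :
  (Some w \in map snd (@mlift V E ends x y e0' u p)) = (w \in map snd p).
Proof.
elim: p u => [//|[e v] p IH] u /=.
rewrite map_cat mem_cat IH in_cons.
case: ifP => _; [case: ifP => _|]; by rewrite /= ?in_cons /= ?orbF.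
Qed.

Lemma memN_lift (V E : finType) (ends : E -> V * V) (x y : V) e0' u p :
  (None \in map snd (@mlift V E ends x y e0' u p)) = has (fun st => xy_edge ends x y st.1) p.
Proof.
elim: p u => [//|[e v] p IH] u /=.
rewrite map_cat mem_cat IH.
by case: ifP => _; [case: ifP => _|]; rewrite /= ?in_cons /= ?orbF.
Qed.

Lemma has_xy1 (V E : finType) (ends : E -> V * V) (x y : V) a p :
  walk_ok ends a p -> has (fun st => xy_edge ends x y st.1) p ->
  (x \in map snd p) || (y \in map snd p).
Proof.
elim: p a => [//|[e v] p IH] a /= /andP [Hj Hw] /orP [Hxy | Hh].
  by case/orP: (xy_joins Hxy Hj) => /andP [_ /eqP ->]; rewrite !in_cons eqxx ?orbT.
by case/orP: (IH _ Hw Hh) => H; rewrite !in_cons H ?orbT.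
Qed.

Lemma has_xy2 (V E : finType) (ends : E -> V * V) (x y : V) a p :
  walk_ok ends a p -> has (fun st => xy_edge ends x y st.1) p ->
  (x \in a :: map snd p) && (y \in a :: map snd p).
Proof.
elim: p a => [//|[e v] p IH] a /= /andP [Hj Hw] /orP [Hxy | Hh].
  by case/orP: (xy_joins Hxy Hj) => /andP [/eqP -> /eqP ->]; rewrite !in_cons !eqxx ?orbT.
by case/andP: (IH _ Hw Hh); rewrite !in_cons => -> ->; rewrite !orbT.
Qed.

Lemma uniq_lift (V E : finType) (ends : E -> V * V) (x y : V) e0' u p :
  walk_ok ends u p -> uniq (u :: map snd p) ->
  uniq (Some u :: map snd (@mlift V E ends x y e0' u p)).
Proof.
elim: p u => [//|[e v] p IH] u /= /andP [Hj Hw] /andP [Hu Hup].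
have eqS : forall a b : V, (Some a == Some b) = (a == b) by [].
have sN : forall z : V, (Some z == None) = false by [].
have Ns : forall z : V, (None == Some z) = false by [].
have Hvp := Hup; move: Hvp => /andP [Hvp Hpu].
rewrite map_cat; case: ifP => Hxy.
  have Hnh : ~~ has (fun st => xy_edge ends x y st.1) p.
    apply/negP => Hh; move: Hu; rewrite in_cons negb_or => /andP [Huv Hup'].
    case/orP: (has_xy1 Hw Hh); case/orP: (xy_joins Hxy Hj) => /andP [/eqP Hx /eqP Hy];
      rewrite -?Hx -?Hy => H; by [rewrite H in Hup' | rewrite H in Hvp].
  have HNn : None \notin map snd (mlift e0' v p) by rewrite memN_lift.
  move: Hu; rewrite in_cons negb_or => /andP [Huv Hup'].
  by case: ifP => _ /=; have := IH v Hw Hup; rewrite /= => /andP [-> ->];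
    rewrite !in_cons memS_lift ?eqS ?sN ?Ns (negbTE Huv) (negbTE Hup') (negbTE HNn).
move: Hu; rewrite /= !in_cons memS_lift eqS negb_or => /andP [Huv Hup'].
by rewrite Huv Hup' /=; exact: IH Hw Hup.
Qed.

Lemma cut_transfer (V E : finType) (ends : E -> V * V) (x y : V) (e0' : {e | xy_edge ends x y e}) lam s t (S' : {set option V}) :
  loopless ends -> ~ adjacent ends s t ->
  temporal_cut (@msub_ends V E ends x y) (fun f => lam (eo f)) (Some s) (Some t) S' ->
  exists2 S, temporal_cut ends lam s t S & #|S| <= #|S'|.
Proof.
move=> Hll Hadj [HsS HtS Hno].
have Hxy0 : x != y.
  move: (valP e0') (Hll (val e0')); rewrite /xy_edge /joins; case: (ends _) => a b /=.
  by case/orP => /eqP [-> ->] //; rewrite eq_sym.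
have He0 : joins ends (val e0') x y := valP e0'.
pose w := if (x == s) || (x == t) then y else x.
have Hw : (w != s) && (w != t).
  rewrite /w; case: ifP => Hx; last by move/negbT: Hx; rewrite negb_or.
  case/orP: Hx => /eqP Hx; subst x.
    rewrite eq_sym Hxy0 /=; apply/negP => /eqP Hy; subst y; apply: Hadj.
    by exists (val e0').
  rewrite [y == t]eq_sym Hxy0 andbT; apply/negP => /eqP Hy; subst y; apply: Hadj.
  by exists (val e0'); rewrite /joins orbC.
case/andP: Hw => Hws Hwt.
pose S0 := [set v | Some v \in S'].
have HS0 : Some @: S0 \subset S'.
  by apply/subsetP => o /imsetP [v]; rewrite inE => Hv ->.
have P0 : forall l : seq nat, sorted leq l = path leq 0 l by case.
exists (if None \in S' then w |: S0 else S0).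
- split.
  + by case: ifP => _; rewrite ?in_setU1 inE (negbTE HsS) ?orbF // eq_sym.
  + by case: ifP => _; rewrite ?in_setU1 inE (negbTE HtS) ?orbF // eq_sym.
  + move=> [p /andP [Htp Hav]]; apply: Hno; exists (mlift e0' s p).
    case/and4P: Htp => Hwk Hu Hl Hs.
    apply/andP; split.
      apply/and4P; split.
      * exact: walk_lift.
      * exact: uniq_lift.
      * by rewrite last_lift (eqP Hl).
      * by rewrite P0; apply: path_lift; rewrite -P0.
    apply/allP => o; rewrite /pverts in_cons => /orP [/eqP -> // | Ho].
    case: o Ho => [v|] Ho.
      rewrite memS_lift in Ho.
      have := allP Hav v; rewrite /pverts in_cons Ho orbT => /(_ isT).
      by apply: contra => H; case: ifP => _; rewrite ?in_setU1 inE H ?orbT.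
    rewrite memN_lift in Ho.
    case HN: (None \in S') => //=.
    case/andP: (has_xy2 Hwk Ho) => Hx Hy.
    have Hwp : w \in pverts s p by rewrite /w; case: ifP.
    by have := allP Hav w Hwp; rewrite HN in_setU1 eqxx.
- case: ifP => HN.
    have := subset_leq_card (_ : None |: (Some @: S0) \subset S').
    rewrite cardsU1 card_imset; last exact: Some_inj.
    have -> : None \notin Some @: S0 by apply/imsetP => [[v _]].
    move=> H; apply: leq_trans (H _); last by rewrite subUset sub1set HN HS0.
    by rewrite cardsU1 leq_add2r leq_b1.
  by rewrite -(card_imset S0 (@Some_inj _)); exact: subset_leq_card.
Qed.

Lemma nonadj_transfer (V E : finType) (ends : E -> V * V) (x y : V) s t :
  ~ adjacent ends s t -> ~ adjacent (@msub_ends V E ends x y) (Some s) (Some t).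
Proof.
move=> Hn [f Hf]; rewrite joinsE in Hf.
have sN : forall z : V, (Some z == None) = false by [].
case: f Hf => [e|e]; last by rewrite !sN !andbF.
by case: ifP => _; [rewrite !sN !andbF | move=> Hf; apply: Hn; exists e].
Qed.

Theorem lemma2 (V E : finType) (ends : E -> V * V) (x y : V) :
  loopless ends ->
  adjacent ends x y ->
  ~ Mengerian ends ->
  ~ @Mengerian (option V : finType) (msub_edge ends x y) (@msub_ends V E ends x y).
Proof.
move=> Hll [e0 He0] HnM HM'; apply: HnM => lam Hpos s t Hst Hadj.
pose e0' : {e | xy_edge ends x y e} := exist _ e0 He0.
have Hst' : Some s != Some t :> option V by [].
have H := HM' (fun f => lam (eo f)) (fun f => Hpos (eo f)) (Some s) (Some t) Hst'
  (nonadj_transfer Hadj).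
apply/eqP; rewrite eqn_leq pmax_le_cmin //=.
have H1 : pmax (@msub_ends V E ends x y) (fun f => lam (eo f)) (Some s) (Some t)
          <= pmax ends lam s t.
  apply/bigmax_leqP => k /asboolP Hk'.
  have Hk := paths_transfer Hk'.
  have Hkb : k < #|V|.+1.
    by rewrite ltnS; exact: leq_trans (duality Hk (cut_exists lam Hst Hadj)) (max_card _).
  apply: (@leq_bigmax_cond _ _ _ (Ordinal Hkb)); exact/asboolP.
have H2 : cmin ends lam s t <=
          cmin (@msub_ends V E ends x y) (fun f => lam (eo f)) (Some s) (Some t).
  rewrite {2}/cmin; apply: (big_ind (fun m => cmin ends lam s t <= m)).
  - by rewrite card_option; exact: leq_trans (cmin_le_card _ _ _ _) (leqnSn _).
  - by move=> a b Ha Hb; rewrite leq_min Ha Hb.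
  - move=> S' /asboolP HS'; case: (cut_transfer e0' Hll Hadj HS') => S HS HSS.
    exact: leq_trans (cmin_le_cut HS) HSS.
by rewrite (leq_trans H2) // -H.
Qed.
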